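(* Let $\mathcal{X}_1,\mathcal{X}_2$ be non-empty sets, $\mathcal{B}_i\subseteq\mathcal{P}(\mathcal{X}_i)\setminus\{\emptyset\}$ and $\mathcal{D}_i$ a coherent set of desirable gambles on $\mathcal{X}_i$ for $i\in\{1,2\}$. Then $\mathcal{D}_1\otimes\mathcal{D}_2$ is a coherent set of desirable gambles on $\mathcal{X}_1\times\mathcal{X}_2$.
   Context: Gambles on a non-empty set $\mathcal{X}$ are bounded real functions; $\mathcal{G}(\mathcal{X})$ is the set of gambles, $\mathcal{G}_{>0}(\mathcal{X})$ the non-negative non-zero gambles, $\mathbb{I}_A$ the indicator of $A$. For $\mathcal{A}\subseteq\mathcal{G}(\mathcal{X})$: $\mathrm{posi}(\mathcal{A}):=\{\sum_{i=1}^n\lambda_if_i\colon n\in\mathbb{N},\lambda_i>0,f_i\in\mathcal{A}\}$, $\mathcal{E}(\mathcal{A}):=\mathrm{posi}(\mathcal{A}\cup\mathcal{G}_{>0}(\mathcal{X}))$. A coherent set of desirable gambles $\mathcal{D}\subseteq\mathcal{G}(\mathcal{X})$ satisfies, for all $f,g\in\mathcal{G}(\mathcal{X})$ and $\lambda>0$: (D1) $f\geq0,f\neq0\Rightarrow f\in\mathcal{D}$; (D2) $f\in\mathcal{D}\Rightarrow\lambda f\in\mathcal{D}$; (D3) $f,g\in\mathcal{D}\Rightarrow f+g\in\mathcal{D}$; (D4) $f\leq0\Rightarrow f\notin\mathcal{D}$. Gambles on $\mathcal{X}_i$ are identified with their cylindrical extensions to $\mathcal{X}_1\times\mathcal{X}_2$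 (e.g. $f(X_1)(x_1,x_2)=f(x_1)$), events $B\subseteq\mathcal{X}_1$ with $B\times\mathcal{X}_2$ (similarly for $\mathcal{X}_2$). $\mathcal{D}_1\otimes\mathcal{D}_2:=\mathcal{E}(\mathcal{A}_{1\to2}\cup\mathcal{A}_{2\to1})$ (with $\mathcal{E}$ taken on $\mathcal{X}_1\times\mathcal{X}_2$), where $\mathcal{A}_{1\to2}:=\{f_2(X_2)\mathbb{I}_{B_1}(X_1)\colon f_2\in\mathcal{D}_2,B_1\in\mathcal{B}_1\cup\{\mathcal{X}_1\}\}$ and $\mathcal{A}_{2\to1}:=\{f_1(X_1)\mathbb{I}_{B_2}(X_2)\colon f_1\in\mathcal{D}_1,B_2\in\mathcal{B}_2\cup\{\mathcal{X}_2\}\}$. *)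

(* Defs.v *)
From Stdlib Require Import Reals List ClassicalDescription.
Open Scope R_scope.

(* A gamble on X is a bounded real function. *)
Definition bounded {X : Type} (f : X -> R) : Prop :=
  exists M : R, forall x, Rabs (f x) <= M.

Definition gset (X : Type) := (X -> R) -> Prop.

Definition Gpos {X : Type} : gset X := fun f =>
  bounded f /\ (forall x, 0 <= f x) /\ (exists x, f x <> 0).

Definition posi {X : Type} (A : gset X) : gset X := fun f =>
  exists l : list (R * (X -> R)),
    l <> nil /\
    Forall (fun p => 0 < fst p /\ A (snd p)) l /\
    forall x, f x = fold_right (fun p acc => fst p * snd p x + acc) 0 l.

Definition natext {X : Type} (A : gset X) : gset X :=
  posi (fun f => A f \/ Gpos f).

(* Coherent set of desirable gambles: D ⊆ G(X) and (D1)-(D4). *)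
Definition coherent {X : Type} (D : gset X) : Prop :=
  (forall f, D f -> bounded f) /\
  (forall f, bounded f -> (forall x, 0 <= f x) -> (exists x, f x <> 0) -> D f) /\
  (forall f (lam : R), bounded f -> 0 < lam -> D f -> D (fun x => lam * f x)) /\
  (forall f g, bounded f -> bounded g -> D f -> D g -> D (fun x => f x + g x)) /\
  (forall f, bounded f -> (forall x, f x <= 0) -> ~ D f).

Definition indic {X : Type} (B : X -> Prop) (x : X) : R :=
  if excluded_middle_informative (B x) then 1 else 0.

Definition A12 {X1 X2 : Type} (BB1 : (X1 -> Prop) -> Prop) (D2 : gset X2)
  : gset (X1 * X2) := fun g =>
  exists f2 B1, D2 f2 /\ (BB1 B1 \/ B1 = (fun _ => True)) /\
    g = (fun z => f2 (snd z) * indic B1 (fst z)).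

Definition A21 {X1 X2 : Type} (BB2 : (X2 -> Prop) -> Prop) (D1 : gset X1)
  : gset (X1 * X2) := fun g =>
  exists f1 B2, D1 f1 /\ (BB2 B2 \/ B2 = (fun _ => True)) /\
    g = (fun z => f1 (fst z) * indic B2 (snd z)).

Definition indep_prod {X1 X2 : Type}
  (BB1 : (X1 -> Prop) -> Prop) (BB2 : (X2 -> Prop) -> Prop)
  (D1 : gset X1) (D2 : gset X2) : gset (X1 * X2) :=
  natext (fun g => A12 BB1 D2 g \/ A21 BB2 D1 g).

(* Main.v *)
Require Import Defs.
From Stdlib Require Import Reals List ClassicalDescription.
From Stdlib Require Import Lra Lia Classical FunctionalExtensionality.
From Stdlib Require ClassicalEpsilon.
Open Scope R_scope.

Lemma indic_1 {X} (P : X -> Prop) x : P x -> indic P x = 1.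
Proof. intros H; unfold indic; destruct (excluded_middle_informative (P x)); [reflexivity|contradiction]. Qed.

Lemma indic_0 {X} (P : X -> Prop) x : ~ P x -> indic P x = 0.
Proof. intros H; unfold indic; destruct (excluded_middle_informative (P x)); [contradiction|reflexivity]. Qed.

Lemma indic_iff {X} (P : X -> Prop) x y : (P x <-> P y) -> indic P x = indic P y.
Proof.
  intros H; unfold indic; destruct (excluded_middle_informative (P x));
  destruct (excluded_middle_informative (P y)); first [reflexivity | tauto].
Qed.

Lemma indic_bounds {X} (P : X -> Prop) x : 0 <= indic P x <= 1.
Proof. unfold indic; destruct (excluded_middle_informative (P x)); lra. Qed.

Definition PhiG {Y Z : Type} (T : list ((Y -> R) * (Z -> Prop))) (z : Z) (y : Y) : R :=
  fold_right (fun t acc => fst t y * indic (snd t) z + acc) 0 T.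

Lemma PhiG_same {Y Z} (T : list ((Y -> R) * (Z -> Prop))) z z' :
  (forall P, In P (map snd T) -> (P z <-> P z')) -> forall y, PhiG T z y = PhiG T z' y.
Proof.
  induction T as [|t T IH]; intros H y; unfold PhiG in *; simpl; [reflexivity|].
  rewrite (indic_iff (snd t) z z').
  - rewrite IH; [reflexivity|]. intros P HP; apply H; simpl; auto.
  - apply H; simpl; auto.
Qed.

Lemma PhiG_zero {Y Z} (T : list ((Y -> R) * (Z -> Prop))) z :
  (forall t, In t T -> ~ snd t z) -> forall y, PhiG T z y = 0.
Proof.
  induction T as [|t T IH]; intros H y; unfold PhiG in *; simpl; [reflexivity|].
  rewrite indic_0 by (apply H; simpl; auto). rewrite IH; [ring|]. intros; apply H; simpl; auto.
Qed.

Lemma PhiG_in_D {Y Z} (D : gset Y) (T : list ((Y -> R) * (Z -> Prop))) z :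
  coherent D -> (forall t, In t T -> D (fst t)) -> (exists t, In t T /\ snd t z) -> D (PhiG T z).
Proof.
  intros HD. pose proof HD as [Hbd [_ [Hsc [Hadd _]]]].
  induction T as [|t T IH]; intros HT [t' [Ht' Hz]]; [destruct Ht'|].
  destruct (classic (snd t z)) as [Hs|Hs].
  - destruct (classic (exists t'', In t'' T /\ snd t'' z)) as [Hex|Hnex].
    + replace (PhiG (t :: T) z) with (fun y => fst t y + PhiG T z y).
      * apply (Hadd (fst t) (PhiG T z)).
        -- apply Hbd; apply HT; simpl; auto.
        -- apply Hbd; apply IH; auto; intros; apply HT; simpl; auto.
        -- apply HT; simpl; auto.
        -- apply IH; auto; intros; apply HT; simpl; auto.
      * apply functional_extensionality; intros y; unfold PhiG; simpl.
        rewrite indic_1 by auto. ring.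
    + replace (PhiG (t :: T) z) with (fst t).
      * apply HT; simpl; auto.
      * apply functional_extensionality; intros y; unfold PhiG; simpl.
        rewrite indic_1 by auto.
        pose proof (PhiG_zero T z) as HZ. unfold PhiG in HZ. rewrite HZ; [ring|].
        intros t'' Ht'' Hs''. apply Hnex; eauto.
  - replace (PhiG (t :: T) z) with (PhiG T z).
    + apply IH; [intros; apply HT; simpl; auto|].
      destruct Ht' as [<-|Ht']; [contradiction|eauto].
    + apply functional_extensionality; intros y; unfold PhiG; simpl.
      rewrite indic_0 by auto. ring.
Qed.

Lemma D_comb {X A : Type} (D : gset X) (F : A -> X -> R) : coherent D ->
  forall c : list (R * A), c <> nil -> Forall (fun p => 0 < fst p /\ D (F (snd p))) c ->
  D (fun x => fold_right (fun p acc => fst p * F (snd p) x + acc) 0 c).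
Proof.
  intros [Hbd [Hpos [Hsc [Hadd Hneg]]]].
  induction c as [|p c IH]; intros Hne HF; [congruence|].
  inversion HF as [|? ? [Hp HDp] HF']; subst.
  destruct (classic (c = nil)) as [->|Hc].
  - simpl. replace (fun x => fst p * F (snd p) x + 0) with (fun x => fst p * F (snd p) x)
      by (apply functional_extensionality; intros; ring).
    apply Hsc; auto.
  - simpl. apply (Hadd (fun x => fst p * F (snd p) x) (fun x => fold_right (fun p acc => fst p * F (snd p) x + acc) 0 c)).
    + apply Hbd; apply Hsc; auto.
    + apply Hbd; apply IH; auto.
    + apply Hsc; auto.
    + apply IH; auto.
Qed.

Fixpoint ssum (n : nat) (f : nat -> R) : R :=
  match n with O => 0 | S k => ssum k f + f k end.

Lemma ssum_ext n f g : (forall j, (j < n)%nat -> f j = g j) -> ssum n f = ssum n g.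
Proof.
  induction n; intros H; simpl; [reflexivity|].
  f_equal; [apply IHn; intros; apply H; lia | apply H; lia].
Qed.

Lemma ssum_le n f g : (forall j, (j < n)%nat -> f j <= g j) -> ssum n f <= ssum n g.
Proof.
  induction n; intros H; simpl; [lra|].
  apply Rplus_le_compat; [apply IHn; intros; apply H; lia | apply H; lia].
Qed.

Lemma ssum_lin n a b f g : ssum n (fun j => a * f j + b * g j) = a * ssum n f + b * ssum n g.
Proof. induction n; simpl; [ring|]. rewrite IHn; ring. Qed.

Lemma ssum_zero n : ssum n (fun _ => 0) = 0.
Proof. induction n; simpl; [ring|]. rewrite IHn; ring. Qed.

Lemma ssum_opp n f : ssum n (fun j => - f j) = - ssum n f.
Proof. induction n; simpl; [ring|]. rewrite IHn; ring. Qed.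

Lemma D_ssum {X} (D : gset X) : coherent D -> forall n (b : nat -> R) (F : nat -> X -> R),
  (forall j, (j < n)%nat -> 0 <= b j) -> (forall j, (j < n)%nat -> D (F j)) ->
  (exists j, (j < n)%nat /\ 0 < b j) -> D (fun x => ssum n (fun j => b j * F j x)).
Proof.
  intros [Hbd [Hpos [Hsc [Hadd Hneg]]]].
  induction n as [|k IH]; intros b F Hb HF [j [Hj Hbj]]; [lia|].
  destruct (classic (exists j, (j < k)%nat /\ 0 < b j)) as [Hex|Hnex].
  - assert (HDk : D (fun x => ssum k (fun j => b j * F j x))).
    { apply IH; [intros; apply Hb; lia | intros; apply HF; lia | auto]. }
    destruct (Req_dec (b k) 0) as [H0|H0].
    + replace (fun x => ssum (S k) (fun j => b j * F j x)) with (fun x => ssum k (fun j => b j * F j x)); auto.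
      apply functional_extensionality; intros x; simpl; rewrite H0; ring.
    + assert (0 < b k) by (specialize (Hb k); assert (k < S k)%nat by lia; specialize (Hb H); lra).
      assert (HDk' : D (fun x => b k * F k x)) by (apply Hsc; [apply Hbd; apply HF; lia| auto | apply HF; lia]).
      simpl. apply (Hadd (fun x => ssum k (fun j => b j * F j x)) (fun x => b k * F k x));
        [apply Hbd; exact HDk | apply Hbd; exact HDk' | exact HDk | exact HDk'].
  - assert (j = k).
    { destruct (Nat.eq_dec j k); auto. exfalso; apply Hnex; exists j; split; auto; lia. }
    subst j.
    replace (fun x => ssum (S k) (fun j => b j * F j x)) with (fun x => b k * F k x).
    + apply Hsc; [apply Hbd; apply HF; lia| auto | apply HF; lia].
    + apply functional_extensionality; intros x; simpl.
      rewrite (ssum_ext k _ (fun _ => 0)); [rewrite ssum_zero; ring|].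
      intros i Hi. assert (b i = 0).
      { assert (0 <= b i) by (apply Hb; lia). destruct (Req_dec (b i) 0); auto.
        exfalso; apply Hnex; exists i; split; auto; lra. }
      rewrite H; ring.
Qed.

Definition comb (c : list (R * (nat -> R))) (j : nat) : R :=
  fold_right (fun p acc => fst p * snd p j + acc) 0 c.

Definition condA (rows : list (nat -> R)) (n : nat) : Prop :=
  forall c, c <> nil -> Forall (fun p => 0 < fst p /\ In (snd p) rows) c ->
  exists j, (j < n)%nat /\ 0 < comb c j.

Definition condB (rows : list (nat -> R)) (n : nat) : Prop :=
  forall b : nat -> R, (forall j, (j < n)%nat -> 0 <= b j) -> (exists j, (j < n)%nat /\ 0 < b j) ->
  exists r, In r rows /\ ssum n (fun j => r j * b j) < 0.

Lemma mx_ge0 l : 0 <= fold_right Rmax 0 l.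
Proof. induction l; simpl; [lra|]. eapply Rle_trans; [exact IHl | apply Rmax_r]. Qed.

Lemma mx_ge l a : In a l -> a <= fold_right Rmax 0 l.
Proof.
  induction l; simpl; [tauto|]. intros [<-|H]; [apply Rmax_l|].
  eapply Rle_trans; [apply IHl; auto|apply Rmax_r].
Qed.

Lemma mx_cases l : fold_right Rmax 0 l = 0 \/ In (fold_right Rmax 0 l) l.
Proof.
  induction l; simpl; [auto|].
  destruct (Rle_dec a (fold_right Rmax 0 l)).
  - rewrite Rmax_right by auto. destruct IHl; auto.
  - rewrite Rmax_left by lra. auto.
Qed.

Lemma ville : forall n rows, (rows <> nil \/ (0 < n)%nat) -> condA rows n -> condB rows n -> False.
Proof.
  induction n as [|k IH]; intros rows Hne HA HB.
  - destruct Hne as [Hne|Hne]; [|lia].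
    destruct rows as [|r rows]; [congruence|].
    destruct (HA ((1, r) :: nil)) as [j [Hj _]]; [discriminate| |lia].
    constructor; [split; simpl; [lra|auto]|constructor].
  - destruct (classic (rows = nil)) as [Hnil|Hnil].
    { subst rows. destruct (HB (fun _ => 1)) as [r [Hr _]];
        [intros; lra| exists k; split; [lia|lra] | destruct Hr]. }
    set (N := filter (fun r : nat -> R => if Rle_dec (r k) 0 then true else false) rows).
    set (Nn := filter (fun r : nat -> R => if Rlt_dec (r k) 0 then true else false) rows).
    set (Pp := filter (fun r : nat -> R => if Rle_dec (r k) 0 then false else true) rows).
    set (cmb := fun (i p : nat -> R) => fun j => p k * i j - i k * p j).
    set (rows2 := N ++ flat_map (fun i => map (fun p => cmb i p) Pp) Nn).
    assert (HN : forall r, In r N <-> In r rows /\ r k <= 0).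
    { intros r; unfold N; rewrite filter_In; destruct (Rle_dec (r k) 0);
        split; intros [H1 H2]; split; auto; try discriminate; contradiction. }
    assert (HNn : forall r, In r Nn <-> In r rows /\ r k < 0).
    { intros r; unfold Nn; rewrite filter_In; destruct (Rlt_dec (r k) 0);
        split; intros [H1 H2]; split; auto; try discriminate; contradiction. }
    assert (HP : forall r, In r Pp <-> In r rows /\ 0 < r k).
    { intros r; unfold Pp; rewrite filter_In; destruct (Rle_dec (r k) 0);
        split; intros [H1 H2]; split; auto; try discriminate; try lra. }
    assert (Hrows2 : forall r, In r rows2 <-> In r N \/ exists i p, In i Nn /\ In p Pp /\ r = cmb i p).
    { intros r; unfold rows2; rewrite in_app_iff, in_flat_map. split.
      - intros [H|[i [Hi H]]]; [left; auto|].
        right; apply in_map_iff in H; destruct H as [p [Hp Hp']]; exists i, p; auto.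
      - intros [H|[i [p [Hi [Hp ->]]]]]; [left; auto|].
        right; exists i; split; auto; apply in_map_iff; exists p; auto. }
    assert (HNn_ne : exists r, In r Nn).
    { destruct (HB (fun j => if Nat.eq_dec j k then 1 else 0)) as [r [Hr Hs]].
      - intros j _; destruct (Nat.eq_dec j k); lra.
      - exists k; split; [lia|]; destruct (Nat.eq_dec k k); [lra|congruence].
      - exists r; apply HNn; split; auto.
        simpl in Hs. rewrite (ssum_ext k _ (fun _ => 0)) in Hs.
        + rewrite ssum_zero in Hs. destruct (Nat.eq_dec k k); [|congruence]. lra.
        + intros j Hj; destruct (Nat.eq_dec j k); [lia|ring]. }
    apply (IH rows2).
    + left. destruct HNn_ne as [r Hr]. intro Heq.
      assert (Hin : In r rows2) by (apply Hrows2; left; apply HN; apply HNn in Hr; split; [tauto| lra]).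
      rewrite Heq in Hin; destruct Hin.
    + intros c Hc HF.
      assert (Hlift : exists c', (c <> nil -> c' <> nil) /\ Forall (fun p => 0 < fst p /\ In (snd p) rows) c'
                 /\ (forall j, (j < k)%nat -> comb c' j = comb c j) /\ comb c' k <= 0).
      { clear Hc. revert HF. induction c as [|[w r] c IHc]; intros HF.
        - exists nil; split; [auto|]. split; [constructor|]. split; [auto|]. unfold comb; simpl; lra.
        - inversion HF as [|? ? [Hw Hr] HF']; subst. simpl in Hw, Hr.
          destruct (IHc HF') as [c0 [_ [Hc0 [Heq0 Hk0]]]].
          apply Hrows2 in Hr. destruct Hr as [Hr | [i [p [Hi [Hp ->]]]]].
          + apply HN in Hr. exists ((w, r) :: c0). split; [discriminate|]. split.
            { constructor; [split; simpl; [auto| tauto] | auto]. }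
            split.
            * intros j Hj; unfold comb in *; simpl; rewrite Heq0; auto.
            * unfold comb in *; simpl. destruct Hr as [_ Hr]. nra.
          + apply HNn in Hi; apply HP in Hp.
            exists ((w * p k, i) :: (w * - i k, p) :: c0). split; [discriminate|]. split.
            * constructor; [split; simpl; [nra|tauto]|]. constructor; [split; simpl; [nra|tauto]|auto].
            * split.
              -- intros j Hj; unfold comb in *; simpl; rewrite <- Heq0; auto. unfold cmb; ring.
              -- unfold comb in *; simpl. nra. }
      destruct Hlift as [c' [Hc' [HF' [Heq' Hk']]]].
      destruct (HA c' (Hc' Hc) HF') as [j [Hj Hpos]].
      destruct (Nat.eq_dec j k) as [->|Hjk]; [lra|].
      exists j. split; [lia|]. rewrite <- Heq'; auto; lia.
    + intros b Hb Hbpos.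
      apply NNPP; intro Hcon.
      assert (Hs : forall r, In r rows2 -> 0 <= ssum k (fun j => r j * b j)).
      { intros r Hr. apply Rnot_lt_le. intro Hlt. apply Hcon. exists r; auto. }
      set (m := fold_right Rmax 0 (map (fun p : nat -> R => - ssum k (fun j => p j * b j) / p k) Pp)).
      set (beta := fun j => if Compare_dec.lt_dec j k then b j else m).
      destruct (HB beta) as [r [Hr Hneg]].
      * intros j Hj. unfold beta; destruct (Compare_dec.lt_dec j k); [apply Hb; auto| apply mx_ge0].
      * destruct Hbpos as [j [Hj Hpos]]; exists j; split; [lia|].
        unfold beta; destruct (Compare_dec.lt_dec j k); [auto|lia].
      * simpl in Hneg.
        rewrite (ssum_ext k _ (fun j => r j * b j)) in Hneg
          by (intros j Hj; unfold beta; destruct (Compare_dec.lt_dec j k); [reflexivity|lia]).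
        replace (beta k) with m in Hneg by (unfold beta; destruct (Compare_dec.lt_dec k k); [lia|reflexivity]).
        destruct (Rle_dec (r k) 0) as [Hle|Hgt].
        -- assert (Hsr : 0 <= ssum k (fun j => r j * b j)) by (apply Hs; apply Hrows2; left; apply HN; auto).
           destruct (Req_dec (r k) 0) as [H0|H0].
           ++ rewrite H0 in Hneg; lra.
           ++ assert (Hrn : r k < 0) by lra.
              destruct (mx_cases (map (fun p : nat -> R => - ssum k (fun j => p j * b j) / p k) Pp)) as [Hm|Hm];
                fold m in Hm.
              ** rewrite Hm in Hneg; lra.
              ** apply in_map_iff in Hm. destruct Hm as [p [Hpm Hp]].
                 assert (Hc : 0 <= ssum k (fun j => cmb r p j * b j)).
                 { apply Hs; apply Hrows2; right; exists r, p; repeat split; auto; apply HNn; auto. }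
                 assert (Hlin : ssum k (fun j => cmb r p j * b j) =
                                p k * ssum k (fun j => r j * b j) - r k * ssum k (fun j => p j * b j)).
                 { unfold cmb.
                   rewrite (ssum_ext k _ (fun j => p k * (r j * b j) + - r k * (p j * b j))) by (intros; ring).
                   rewrite ssum_lin. ring. }
                 apply HP in Hp. destruct Hp as [_ Hpk].
                 rewrite <- Hpm in Hneg.
                 set (sr := ssum k (fun j => r j * b j)) in *.
                 set (sp := ssum k (fun j => p j * b j)) in *.
                 assert (Heqm : p k * (sr + r k * (- sp / p k)) = p k * sr - r k * sp) by (field; lra).
                 assert (p k * (sr + r k * (- sp / p k)) < 0) by nra.
                 lra.
        -- assert (Hrk : 0 < r k) by lra.
           assert (Hm : - ssum k (fun j => r j * b j) / r k <= m).
           { apply mx_ge. apply in_map_iff. exists r; split; auto. apply HP; auto. }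
           set (sr := ssum k (fun j => r j * b j)) in *.
           assert (r k * (- sr / r k) = - sr) by (field; lra).
           assert (r k * (- sr / r k) <= r k * m) by (apply Rmult_le_compat_l; lra).
           lra.
Qed.

Lemma filter_prop {A} (P : A -> Prop) (l : list A) y :
  In y (filter (fun y => if excluded_middle_informative (P y) then true else false) l) <-> In y l /\ P y.
Proof.
  rewrite filter_In. destruct (excluded_middle_informative (P y));
  split; intros [H1 H2]; split; auto; try discriminate; contradiction.
Qed.

Definition sameP {X} (Ps : list (X -> Prop)) (x y : X) := forall P, In P Ps -> (P x <-> P y).

Lemma reps {X} (x0 : X) (Ps : list (X -> Prop)) :
  exists L : list X, forall x, exists y, In y L /\ sameP Ps x y.
Proof.
  induction Ps as [|P Ps IH].
  - exists (x0 :: nil). intros x. exists x0. split; [left; auto|]. intros P [].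
  - destruct IH as [L HL].
    assert (aux : forall L0, exists L', forall y, In y L0 -> forall z, sameP Ps z y ->
                     exists u, In u L' /\ sameP Ps z u /\ (P z <-> P u)).
    { induction L0 as [|y L0 IHL].
      - exists nil; intros y [].
      - destruct IHL as [L' HL'].
        assert (Ha : exists a, forall z, sameP Ps z y -> P z -> sameP Ps z a /\ P a).
        { destruct (classic (exists z0, sameP Ps z0 y /\ P z0)) as [[z0 [Hz0 Pz0]]|Hn].
          - exists z0. intros z Hz Pz. split; auto. intros Q HQ.
            pose proof (Hz Q HQ); pose proof (Hz0 Q HQ); tauto.
          - exists y. intros z Hz Pz. exfalso; apply Hn; eauto. }
        assert (Hb : exists b, forall z, sameP Ps z y -> ~ P z -> sameP Ps z b /\ ~ P b).
        { destruct (classic (exists z0, sameP Ps z0 y /\ ~ P z0)) as [[z0 [Hz0 Pz0]]|Hn].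
          - exists z0. intros z Hz Pz. split; auto. intros Q HQ.
            pose proof (Hz Q HQ); pose proof (Hz0 Q HQ); tauto.
          - exists y. intros z Hz Pz. exfalso; apply Hn; eauto. }
        destruct Ha as [a Ha]; destruct Hb as [b Hb].
        exists (a :: b :: L'). intros y' Hy' z Hz. destruct Hy' as [<-|Hy'].
        + destruct (classic (P z)) as [Pz|Pz].
          * destruct (Ha z Hz Pz) as [H1 H2]. exists a. split; [left; auto|]. split; auto; tauto.
          * destruct (Hb z Hz Pz) as [H1 H2]. exists b. split; [right; left; auto|]. split; auto; tauto.
        + destruct (HL' y' Hy' z Hz) as [u [Hu Hu']]. exists u. split; [right; right; auto| auto]. }
    destruct (aux L) as [L' HL']. exists L'. intros x.
    destruct (HL x) as [y [Hy Hs]]. destruct (HL' y Hy x Hs) as [u [Hu [Hs' Hp]]].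
    exists u; split; auto. intros Q [<-|HQ]; auto.
Qed.

Lemma lift {A B} (f : A -> B) (l : list A) (c : list (R * B)) :
  Forall (fun p => 0 < fst p /\ In (snd p) (map f l)) c ->
  exists c', c = map (fun p => (fst p, f (snd p))) c' /\ Forall (fun p => 0 < fst p /\ In (snd p) l) c'.
Proof.
  induction c as [|[w r] c IH]; intros HF.
  - exists nil; split; auto.
  - inversion HF as [|? ? [Hw Hr] HF']; subst. simpl in Hw, Hr.
    apply in_map_iff in Hr. destruct Hr as [y [Hy Hyl]].
    destruct (IH HF') as [c' [Hc' HF'']].
    exists ((w, y) :: c'). simpl. split; [rewrite Hc', Hy; reflexivity|]. constructor; auto.
Qed.

Lemma comb_map {A} (f : A -> nat -> R) (c' : list (R * A)) j :
  comb (map (fun p => (fst p, f (snd p))) c') j = fold_right (fun p acc => fst p * f (snd p) j + acc) 0 c'.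
Proof. unfold comb. induction c' as [|p c' IH]; simpl; [reflexivity|]. rewrite IH. reflexivity. Qed.

Lemma fold_le {A} (c : list (R * A)) (F G : A -> R) :
  (forall p, In p c -> 0 < fst p /\ F (snd p) <= G (snd p)) ->
  fold_right (fun p acc => fst p * F (snd p) + acc) 0 c <= fold_right (fun p acc => fst p * G (snd p) + acc) 0 c.
Proof.
  induction c as [|p c IH]; intros H; simpl; [lra|].
  destruct (H p (or_introl eq_refl)) as [Hp HFG].
  assert (fst p * F (snd p) <= fst p * G (snd p)) by (apply Rmult_le_compat_l; lra).
  assert (fold_right (fun p acc => fst p * F (snd p) + acc) 0 c <= fold_right (fun p acc => fst p * G (snd p) + acc) 0 c)
    by (apply IH; intros; apply H; right; auto).
  lra.
Qed.

Lemma fold_nonpos {A} (c : list (R * A)) (F : A -> R) :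
  (forall p, In p c -> 0 < fst p /\ F (snd p) <= 0) ->
  fold_right (fun p acc => fst p * F (snd p) + acc) 0 c <= 0.
Proof.
  induction c as [|p c IH]; intros H; simpl; [lra|].
  destruct (H p (or_introl eq_refl)) as [Hp HF].
  assert (fst p * F (snd p) <= 0) by nra.
  assert (fold_right (fun p acc => fst p * F (snd p) + acc) 0 c <= 0) by (apply IH; intros; apply H; right; auto).
  lra.
Qed.

Lemma pos_point {X} (D : gset X) (f : X -> R) : coherent D -> D f -> exists x, 0 < f x.
Proof.
  intros [Hbd [_ [_ [_ Hneg]]]] Hf. apply NNPP; intro Hn.
  apply (Hneg f (Hbd f Hf)); [|exact Hf].
  intros x. apply Rnot_lt_le. intro; apply Hn; eauto.
Qed.

Lemma nonnil_in {A} (l : list A) : l <> nil -> exists a, In a l.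
Proof. destruct l; [congruence| intros; exists a; left; auto]. Qed.

Lemma in_len {A} (l : list A) y : In y l -> (0 < length l)%nat.
Proof. destruct l; simpl; [tauto|lia]. Qed.

Lemma fold_bounded {X} (l : list (R * (X -> R))) :
  Forall (fun p => Defs.bounded (snd p)) l -> Defs.bounded (fun x => fold_right (fun p acc => fst p * snd p x + acc) 0 l).
Proof.
  induction l as [|p l IH]; intros HF.
  - exists 0. intros; simpl. rewrite Rabs_R0; lra.
  - inversion HF as [|? ? [M HM] HF']; subst. destruct (IH HF') as [M' HM'].
    exists (Rabs (fst p) * M + M'). intros x. simpl.
    eapply Rle_trans; [apply Rabs_triang|]. rewrite Rabs_mult.
    apply Rplus_le_compat; [apply Rmult_le_compat_l; [apply Rabs_pos| apply HM] | apply HM'].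
Qed.

Lemma fold_app_sum {X} (l1 l2 : list (R * (X -> R))) x :
  fold_right (fun p acc => fst p * snd p x + acc) 0 (l1 ++ l2) =
  fold_right (fun p acc => fst p * snd p x + acc) 0 l1 + fold_right (fun p acc => fst p * snd p x + acc) 0 l2.
Proof. induction l1 as [|p l1 IH]; simpl; [ring|]. rewrite IH; ring. Qed.

Lemma key (X1 X2 : Type) (x1 : X1) (x2 : X2) (D1 : gset X1) (D2 : gset X2)
  (HD1 : coherent D1) (HD2 : coherent D2)
  (T12 : list ((X2 -> R) * (X1 -> Prop))) (T21 : list ((X1 -> R) * (X2 -> Prop)))
  (H12 : forall t, In t T12 -> D2 (fst t) /\ exists a, snd t a)
  (H21 : forall t, In t T21 -> D1 (fst t) /\ exists b, snd t b)
  (Hne : T12 <> nil \/ T21 <> nil)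
  (Hle : forall a b, PhiG T12 a b + PhiG T21 b a <= 0) : False.
Proof.
  destruct (reps x1 (map snd T12)) as [L1 HL1].
  destruct (reps x2 (map snd T21)) as [L2 HL2].
  set (act1 := fun y : X1 => exists t, In t T12 /\ snd t y).
  set (act2 := fun y : X2 => exists t, In t T21 /\ snd t y).
  set (R1 := filter (fun y => if excluded_middle_informative (act1 y) then true else false) L1).
  set (R2 := filter (fun y => if excluded_middle_informative (act2 y) then true else false) L2).
  assert (HR1 : forall y, In y R1 <-> In y L1 /\ act1 y) by (intros; apply filter_prop).
  assert (HR2 : forall y, In y R2 <-> In y L2 /\ act2 y) by (intros; apply filter_prop).
  assert (Hact1 : forall a y, sameP (map snd T12) a y -> act1 a -> act1 y).
  { intros a y Hs [t [Ht Hta]]. exists t; split; auto. apply (Hs (snd t)); [apply in_map; auto | auto]. }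
  assert (Hact2 : forall a y, sameP (map snd T21) a y -> act2 a -> act2 y).
  { intros a y Hs [t [Ht Hta]]. exists t; split; auto. apply (Hs (snd t)); [apply in_map; auto | auto]. }
  assert (Hin1 : forall y, act1 y -> D2 (PhiG T12 y)).
  { intros y Hy; apply PhiG_in_D; auto; intros t Ht; apply H12; auto. }
  assert (Hin2 : forall y, act2 y -> D1 (PhiG T21 y)).
  { intros y Hy; apply PhiG_in_D; auto; intros t Ht; apply H21; auto. }
  assert (Hz1 : forall a, ~ act1 a -> forall b, PhiG T12 a b = 0).
  { intros a Ha b; apply PhiG_zero; intros t Ht Hta; apply Ha; exists t; auto. }
  assert (Hz2 : forall a, ~ act2 a -> forall b, PhiG T21 a b = 0).
  { intros a Ha b; apply PhiG_zero; intros t Ht Hta; apply Ha; exists t; auto. }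
  assert (Hex : forall y y', exists w, (forall b, sameP (map snd T21) b y' -> PhiG T12 y b <= w) /\
                                 (forall a, sameP (map snd T12) a y -> w <= - PhiG T21 y' a)).
  { intros y y'.
    destruct (completeness (fun v => exists b, sameP (map snd T21) b y' /\ v = PhiG T12 y b)) as [m [Hub Hlub]].
    - exists (- PhiG T21 y' y). intros v [b [Hb ->]].
      specialize (Hle y b). rewrite (PhiG_same T21 b y' Hb y) in Hle. lra.
    - exists (PhiG T12 y y'), y'. split; [intros P _; tauto | reflexivity].
    - exists m. split.
      + intros b Hb. apply Hub. exists b; auto.
      + intros a Ha. apply Hlub. intros v [b [Hb ->]].
        specialize (Hle a b). rewrite (PhiG_same T21 b y' Hb a) in Hle.
        rewrite (PhiG_same T12 a y Ha b) in Hle. lra. }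
  set (Wf := fun y y' => ClassicalEpsilon.epsilon (inhabits 0) (fun w =>
              (forall b, sameP (map snd T21) b y' -> PhiG T12 y b <= w) /\
              (forall a, sameP (map snd T12) a y -> w <= - PhiG T21 y' a))).
  assert (HW : forall y y', (forall b, sameP (map snd T21) b y' -> PhiG T12 y b <= Wf y y') /\
                      (forall a, sameP (map snd T12) a y -> Wf y y' <= - PhiG T21 y' a)).
  { intros y y'. unfold Wf. apply ClassicalEpsilon.epsilon_spec. apply Hex. }
  set (rowf := fun y => fun j => Wf y (nth j R2 x2)).
  apply (ville (length R2) (map rowf R1)).
  - destruct Hne as [Hne|Hne].
    + left. destruct (nonnil_in T12 Hne) as [t Ht]. destruct (H12 t Ht) as [_ [a Ha]].
      destruct (HL1 a) as [y [Hy Hs]].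
      intro Hnil. assert (Hin : In (rowf y) (map rowf R1)).
      { apply in_map; apply HR1; split; auto; apply (Hact1 a y Hs); exists t; auto. }
      rewrite Hnil in Hin; destruct Hin.
    + right. destruct (nonnil_in T21 Hne) as [t Ht]. destruct (H21 t Ht) as [_ [a Ha]].
      destruct (HL2 a) as [y [Hy Hs]].
      apply (in_len R2 y). apply HR2; split; auto; apply (Hact2 a y Hs); exists t; auto.
  - intros c Hc HF.
    destruct (lift rowf R1 c HF) as [c' [-> HF']].
    assert (Hc' : c' <> nil) by (intro; subst; apply Hc; reflexivity).
    set (F2 := fun b => fold_right (fun p acc => fst p * PhiG T12 (snd p) b + acc) 0 c').
    assert (HDF : D2 F2).
    { apply (D_comb D2 (fun y => PhiG T12 y)); auto. rewrite Forall_forall in *.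
      intros p Hp. destruct (HF' p Hp) as [Hw Hy]. split; auto. apply Hin1. apply HR1 in Hy; tauto. }
    destruct (pos_point D2 F2 HD2 HDF) as [b Hb].
    destruct (HL2 b) as [y' [Hy' Hs']].
    rewrite Forall_forall in HF'.
    assert (Ha2 : act2 y').
    { apply NNPP; intro Hna.
      assert (Hna' : ~ act2 b) by (intro Hab; apply Hna; apply (Hact2 b y' Hs' Hab)).
      assert (F2 b <= 0).
      { unfold F2. apply (fold_nonpos c' (fun y => PhiG T12 y b)).
        intros p Hp. split; [apply HF'; auto|].
        specialize (Hle (snd p) b). rewrite (Hz2 b Hna' (snd p)) in Hle. lra. }
      lra. }
    assert (Hy'R : In y' R2) by (apply HR2; auto).
    destruct (In_nth R2 y' x2 Hy'R) as [j [Hj Hnth]].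
    exists j. split; auto.
    rewrite comb_map. unfold rowf. cbv beta. rewrite Hnth.
    apply Rlt_le_trans with (F2 b); auto.
    unfold F2. apply (fold_le c' (fun y => PhiG T12 y b) (fun y => Wf y y')).
    intros p Hp. split; [apply HF'; auto|]. apply (HW (snd p) y'). auto.
  - intros beta Hb Hbpos.
    set (F1 := fun a => ssum (length R2) (fun j => beta j * PhiG T21 (nth j R2 x2) a)).
    assert (HDF : D1 F1).
    { apply (D_ssum D1 HD1 (length R2) beta (fun j => PhiG T21 (nth j R2 x2))); auto.
      intros j Hj. apply Hin2. apply HR2. apply nth_In. auto. }
    destruct (pos_point D1 F1 HD1 HDF) as [a Ha].
    destruct (HL1 a) as [y [Hy Hs]].
    assert (Ha1 : act1 y).
    { apply NNPP; intro Hna. assert (Hna' : ~ act1 a) by (intro; apply Hna; apply (Hact1 a y Hs); auto).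
      assert (F1 a <= 0).
      { unfold F1. apply Rle_trans with (ssum (length R2) (fun _ => 0)); [|rewrite ssum_zero; lra].
        apply ssum_le. intros j Hj.
        specialize (Hle a (nth j R2 x2)). rewrite (Hz1 a Hna') in Hle. specialize (Hb j Hj). nra. }
      lra. }
    exists (rowf y). split; [apply in_map; apply HR1; auto|].
    apply Rle_lt_trans with (- F1 a); [|lra].
    unfold F1. rewrite <- ssum_opp. apply ssum_le. intros j Hj. unfold rowf.
    destruct (HW y (nth j R2 x2)) as [_ HW2]. specialize (HW2 a Hs). specialize (Hb j Hj). nra.
Qed.

Lemma decomp (X1 X2 : Type) (x1 : X1) (x2 : X2)
  (BB1 : (X1 -> Prop) -> Prop) (BB2 : (X2 -> Prop) -> Prop)
  (HB1 : forall B, BB1 B -> exists x, B x) (HB2 : forall B, BB2 B -> exists x, B x)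
  (D1 : gset X1) (D2 : gset X2) (HD1 : coherent D1) (HD2 : coherent D2) :
  forall l : list (R * (X1 * X2 -> R)),
  Forall (fun p => 0 < fst p /\ ((A12 BB1 D2 (snd p) \/ A21 BB2 D1 (snd p)) \/ Gpos (snd p))) l ->
  exists T12 T21 (h : X1 * X2 -> R),
    (forall t, In t T12 -> D2 (fst t) /\ exists a, snd t a) /\
    (forall t, In t T21 -> D1 (fst t) /\ exists b, snd t b) /\
    (forall z, 0 <= h z) /\
    (forall z, fold_right (fun p acc => fst p * snd p z + acc) 0 l =
               PhiG T12 (fst z) (snd z) + PhiG T21 (snd z) (fst z) + h z) /\
    (T12 = nil -> T21 = nil -> l <> nil -> exists z, 0 < h z).
Proof.
  destruct HD1 as [Hb1 [_ [Hs1 _]]]. destruct HD2 as [Hb2 [_ [Hs2 _]]].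
  induction l as [|p l IH]; intros HF.
  - exists nil, nil, (fun _ => 0). split; [intros t []|]. split; [intros t []|].
    split; [intros; lra|]. split; [intros z; unfold PhiG; simpl; ring|]. intros _ _ H; congruence.
  - inversion HF as [|? ? [Hp Hcase] HF']; subst.
    destruct (IH HF') as [T12 [T21 [h [H12 [H21 [Hh [Heq Hpos]]]]]]].
    destruct Hcase as [[HA|HA]|HG].
    + destruct HA as [f2 [B1 [Hf2 [HB Hg]]]].
      exists ((fun b => fst p * f2 b, B1) :: T12), T21, h.
      split.
      { intros t [<-|Ht]; [|apply H12; auto]. simpl. split.
        - apply Hs2; [apply Hb2; auto| auto | auto].
        - destruct HB as [HB| ->]; [apply HB1; auto| exists x1; auto]. }
      split; auto. split; auto. split.
      { intros z. simpl. rewrite Heq, Hg. unfold PhiG; simpl. ring. }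
      { intros E; discriminate. }
    + destruct HA as [f1 [B2 [Hf1 [HB Hg]]]].
      exists T12, ((fun a => fst p * f1 a, B2) :: T21), h.
      split; auto. split.
      { intros t [<-|Ht]; [|apply H21; auto]. simpl. split.
        - apply Hs1; [apply Hb1; auto| auto | auto].
        - destruct HB as [HB| ->]; [apply HB2; auto| exists x2; auto]. }
      split; auto. split.
      { intros z. simpl. rewrite Heq, Hg. unfold PhiG; simpl. ring. }
      { intros _ E; discriminate. }
    + destruct HG as [Hbg [Hnn [z0 Hz0]]].
      exists T12, T21, (fun z => fst p * snd p z + h z).
      split; auto. split; auto. split.
      { intros z. specialize (Hh z). specialize (Hnn z). nra. }
      split.
      { intros z. simpl. rewrite Heq. ring. }
      { intros _ _ _. exists z0. specialize (Hh z0). specialize (Hnn z0).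
        assert (0 < snd p z0) by (destruct (Rle_lt_dec (snd p z0) 0); [exfalso; apply Hz0; lra | lra]).
        nra. }
Qed.

Theorem proposition39 (X1 X2 : Type) (x1 : X1) (x2 : X2)
  (BB1 : (X1 -> Prop) -> Prop) (BB2 : (X2 -> Prop) -> Prop)
  (HB1 : forall B, BB1 B -> exists x, B x)
  (HB2 : forall B, BB2 B -> exists x, B x)
  (D1 : gset X1) (D2 : gset X2)
  (HD1 : coherent D1) (HD2 : coherent D2) :
  coherent (indep_prod BB1 BB2 D1 D2).
Proof.
  pose proof HD1 as [Hb1 [Hp1 [Hs1 [Ha1 Hn1]]]].
  pose proof HD2 as [Hb2 [Hp2 [Hs2 [Ha2 Hn2]]]].
  unfold coherent, indep_prod, natext, posi.
  split; [|split; [|split; [|split]]].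
  - intros f [l [_ [HF Heq]]].
    assert (Hbl : Defs.bounded (fun x => fold_right (fun p acc => fst p * snd p x + acc) 0 l)).
    { apply fold_bounded. rewrite Forall_forall in HF |- *. intros p Hp.
      destruct (HF p Hp) as [_ [[HA|HA]|HG]].
      - destruct HA as [f2 [B1 [Hf2 [_ ->]]]]. destruct (Hb2 f2 Hf2) as [M HM]. exists M. intros z.
        rewrite Rabs_mult. pose proof (indic_bounds B1 (fst z)).
        rewrite (Rabs_pos_eq (indic B1 (fst z))) by lra. specialize (HM (snd z)).
        pose proof (Rabs_pos (f2 (snd z))). nra.
      - destruct HA as [f1 [B2 [Hf1 [_ ->]]]]. destruct (Hb1 f1 Hf1) as [M HM]. exists M. intros z.
        rewrite Rabs_mult. pose proof (indic_bounds B2 (snd z)).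
        rewrite (Rabs_pos_eq (indic B2 (snd z))) by lra. specialize (HM (fst z)).
        pose proof (Rabs_pos (f1 (fst z))). nra.
      - destruct HG as [Hbd _]; exact Hbd. }
    destruct Hbl as [M HM]. exists M. intros x. rewrite Heq. apply HM.
  - intros f Hbf Hnn Hnz. exists ((1, f) :: nil). split; [discriminate|]. split.
    + constructor; [|constructor]. simpl. split; [lra|]. right. split; auto.
    + intros x; simpl; ring.
  - intros f lam Hbf Hlam [l [Hnil [HF Heq]]].
    exists (map (fun p => (lam * fst p, snd p)) l). split; [destruct l; simpl; congruence|]. split.
    + rewrite Forall_forall in *. intros p Hp. apply in_map_iff in Hp. destruct Hp as [q [<- Hq]].
      simpl. destruct (HF q Hq) as [Hq1 Hq2]. split; [nra|exact Hq2].
    + intros x. rewrite Heq. clear. induction l as [|p l IH]; simpl; [ring|]. rewrite <- IH; ring.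
  - intros f g Hbf Hbg [l1 [Hn1' [HF1 Heq1]]] [l2 [Hn2' [HF2 Heq2]]].
    exists (l1 ++ l2). split; [destruct l1; [congruence|discriminate]|]. split.
    + apply Forall_app; auto.
    + intros x. rewrite Heq1, Heq2, fold_app_sum. reflexivity.
  - intros f Hbf Hle [l [Hnil [HF Heq]]].
    destruct (decomp X1 X2 x1 x2 BB1 BB2 HB1 HB2 D1 D2 HD1 HD2 l HF)
      as [T12 [T21 [h [H12 [H21 [Hh [Heqh Hpos]]]]]]].
    destruct (classic (T12 = nil /\ T21 = nil)) as [[E1 E2]|Hne].
    + destruct (Hpos E1 E2 Hnil) as [z Hz]. specialize (Hle z).
      rewrite Heq, Heqh, E1, E2 in Hle. unfold PhiG in Hle; simpl in Hle. lra.
    + apply (key X1 X2 x1 x2 D1 D2 HD1 HD2 T12 T21 H12 H21).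
      * destruct (classic (T12 = nil)); [right; intro; apply Hne; auto | left; auto].
      * intros a b. specialize (Hle (a, b)). rewrite Heq, Heqh in Hle. cbn [fst snd] in Hle.
        specialize (Hh (a, b)). lra.
Qed.
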